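(* Let $p\in\mathbb R^n$, $\omega\in\mathbb R^p$, let $\xi=p^aP_a+\omega^iL_i$ and let $\psi_t$ be the one-parameter group of isometries generated by $\xi$, $\hat x=\psi_t(x)$. Define $O^a{}_b=e^a{}_{\hat\alpha}(\hat x)\,\frac{\partial\hat x^\alpha}{\partial x^\mu}\,e_b{}^\mu(x)$. Then for $p=0$ and $x=x'$ (i.e. $y=0$), $$O\big|_{p=y=0}=\exp[-tD(\omega)],\qquad D(\omega)=\omega^iD_i.$$
   Context: $(M,g)$ is an $n$-dimensional complete simply connected Riemannian manifold with parallel Riemann tensor (a Riemannian symmetric space). Fix $x'\in M$ and an orthonormal frame $e_a{}^\mu(x')$ at $x'$, extended to a neighbourhood to an orthonormal frame $e_a{}^\mu(x)$ by parallel transport along the geodesics from $x'$, with dual coframe $e^a{}_\mu$; let $y^a$ be the corresponding Riemann normal coordinates centred at $x'$. Frame indices $a,b,\dots\in\{1,\dots,n\}$ are raised/lowered with $\delta_{ab}$; $R_{abcd}$ are the frame components of the curvature at $x'$. The curvature is written as $R_{abcd}=\beta_{ik}E^i{}_{ab}E^k{}_{cd}$ with $E^i{}_{ab}$ ($i=1,\dots,p$) antisymmetric $n\times n$ matrices and $(\beta_{ik})$ real symmetric nondegenerate; $D^a{}_{ib}=-\beta_{ik}E^k{}_{cb}\delta^{ca}$. With $K^a{}_b=R^a{}_{cbd}y^cy^d$, the Killing vector fields are $P_a=(\sqrt K\cot\sqrt K)^b{}_a\,\partial/\partial y^b$ and $L_i=-D^b{}_{ia}y^a\,\partial/\partial y^b$.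 *)

(* Defs.v *)
From HB Require Import structures.
From mathcomp Require Import all_boot all_order all_algebra.
From mathcomp Require Import all_classical all_reals all_analysis.
Set Implicit Arguments. Unset Strict Implicit. Unset Printing Implicit Defensive.
Import Order.TTheory GRing.Theory Num.Theory.
Import numFieldNormedType.Exports.
Local Open Scope ring_scope.

Definition mexp (R : realType) (n : nat) (A : 'M[R]_n) : 'M[R]_n :=
  limn (series (fun k : nat => (k`!%:R)^-1 *: A ^+ k)).

Definition Dmat (R : realType) (n p : nat) (beta : 'M[R]_p)
    (E : 'I_p -> 'M[R]_n) (i : 'I_p) : 'M[R]_n :=
  \matrix_(a < n, b < n) - \sum_(k < p) \sum_(c < n)
      beta i k * E k c b * (c == a)%:R.

Definition Domega (R : realType) (n p : nat) (beta : 'M[R]_p)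
    (E : 'I_p -> 'M[R]_n) (omega : 'rV[R]_p) : 'M[R]_n :=
  \sum_(i < p) omega 0 i *: Dmat beta E i.

Definition Rcurv (R : realType) (n p : nat) (beta : 'M[R]_p)
    (E : 'I_p -> 'M[R]_n) (a b c d : 'I_n) : R :=
  \sum_(i < p) \sum_(k < p) beta i k * E i a b * E k c d.

(** Components, in Riemann normal coordinates y centred at x', of the Killing
    field L_i = - D^b_{ia} y^a d/dy^b; y is a row vector, component b. *)
Definition Lfield (R : realType) (n p : nat) (beta : 'M[R]_p)
    (E : 'I_p -> 'M[R]_n) (i : 'I_p) (y : 'rV[R]_n) : 'rV[R]_n :=
  \row_(b < n) - \sum_(a < n) Dmat beta E i b a * y 0 a.

(** xi = p^a P_a + omega^i L_i at p = 0, i.e. xi = omega^i L_i. *)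
Definition xi0 (R : realType) (n p : nat) (beta : 'M[R]_p)
    (E : 'I_p -> 'M[R]_n) (omega : 'rV[R]_p) (y : 'rV[R]_n) : 'rV[R]_n :=
  \sum_(i < p) omega 0 i *: Lfield beta E i y.

Definition ucoord (R : realType) (n : nat) (mu : 'I_n) : 'rV[R]_n :=
  \row_(j < n) (j == mu)%:R.

Definition jac (R : realType) (n : nat) (f : 'rV[R]_n -> 'rV[R]_n)
    (y : 'rV[R]_n) : 'M[R]_n :=
  \matrix_(alpha < n, mu < n) ('D_(@ucoord R n mu) f y) 0 alpha.

(** O^a_b = e^a_alpha(xhat) (d xhat^alpha/d x^mu) e_b^mu(x),
    with frame F y b mu = e_b^mu and coframe C y a alpha = e^a_alpha. *)
Definition Omat (R : realType) (n : nat) (C F : 'rV[R]_n -> 'M[R]_n)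
    (psit : 'rV[R]_n -> 'rV[R]_n) (y : 'rV[R]_n) : 'M[R]_n :=
  \matrix_(a < n, b < n) \sum_(alpha < n) \sum_(mu < n)
     C (psit y) a alpha * jac psit y alpha mu * F y b mu.

(* Main.v *)
Require Import Defs.
From HB Require Import structures.
From mathcomp Require Import all_boot all_order all_algebra.
From mathcomp Require Import all_classical all_reals all_analysis.
From mathcomp Require Import lra ring.
Import Order.TTheory GRing.Theory Num.Theory.
Import numFieldNormedType.Exports.
Local Open Scope ring_scope.

Lemma cmp_le (R : realType) (u psi du dpsi : R -> R) (a b : R) : a <= b ->
 (forall r, is_derive r (1:R) u (du r)) -> (forall r, is_derive r (1:R) psi (dpsi r)) ->
 (forall r, a < r -> r < b -> `|du r| <= dpsi r) -> `|u b - u a| <= psi b - psi a.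
Proof.
move=> ab du_ dpsi_ hb.
have cont (g dg : R -> R) : (forall r, is_derive r (1:R) g (dg r)) -> {within `[a,b], continuous g}%classic.
  move=> H; apply: continuous_subspaceT => r.
  case: (H r) => dr _; exact/differentiable_continuous/derivable1_diffP.
have inc (g dg : R -> R) : (forall r, is_derive r (1:R) g (dg r)) -> (forall r, a < r -> r < b -> 0 <= dg r) -> g a <= g b.
  move=> H Hp; apply: (@ger0_derive1_le_cc _ g a b).
  - move=> r _; by case: (H r).
  - move=> r; rewrite in_itv /= => /andP[h1 h2]; rewrite derive1E derive_val; exact: Hp.
  - exact: cont H.
  - by rewrite in_itv /= lexx ab.
  - by rewrite in_itv /= lexx ab.
  - exact: ab.
have h1 := inc (psi - u) (fun r => dpsi r - du r) (fun r => is_deriveB (dpsi_ r) (du_ r)).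
have h2 := inc (psi + u) (fun r => dpsi r + du r) (fun r => is_deriveD (dpsi_ r) (du_ r)).
rewrite ler_norml; apply/andP; split.
- have : psi a + u a <= psi b + u b.
    apply: h2 => r r1 r2; have := hb r r1 r2; rewrite ler_norml => /andP[? ?]; lra.
  lra.
- have : psi a - u a <= psi b - u b.
    apply: h1 => r r1 r2; have := hb r r1 r2; rewrite ler_norml => /andP[? ?]; lra.
  lra.
Qed.
Definition tapp {R: realType} {n} (A : 'M[R]_n) (y : 'rV[R]_n) (s : R) (K : nat) (j : 'I_n) : R :=
  \sum_(k < K) s ^+ k * ((A ^+ k *m y^T) j 0 / k`!%:R).

Lemma term_derive (R : realType) (k : nat) (c s : R) :
  is_derive s (1:R) (fun r : R => r ^+ k * c) (k%:R * s ^+ k.-1 * c).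
Proof.
have -> : (fun r : R => r ^+ k * c) = c \o* (@GRing.exp R ^~ k) by [].
apply: DeriveDef; first exact/derivableM/derivable_cst/exprn_derivable.
by rewrite deriveMr ?exp_derive//; [rewrite /GRing.scale/= mulr1 mulrC | exact: exprn_derivable].
Qed.

Lemma tapp_derive (R : realType) n (A : 'M[R]_n) (y : 'rV[R]_n) (s : R) K j :
  is_derive s (1:R) (fun r => tapp A y r K.+1 j) (\sum_l A j l * tapp A y s K l).
Proof.
rewrite /tapp.
have -> : (fun r => \sum_(k < K.+1) r ^+ k * ((A ^+ k *m y^T) j 0 / k`!%:R)) =
   \sum_(k < K.+1) (fun r => r ^+ k * ((A ^+ k *m y^T) j 0 / k`!%:R)).
  by rewrite fct_sumE.
apply: is_derive_eq; first by apply: is_derive_sum => k; exact: term_derive.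
rewrite big_ord_recl /= mul0r mul0r add0r.
have -> : \sum_l A j l * \sum_(k < K) s ^+ k * ((A ^+ k *m y^T) l 0 / k`!%:R)
   = \sum_(k < K) s ^+ k * ((A ^+ k.+1 *m y^T) j 0 / k`!%:R).
  under eq_bigr do rewrite mulr_sumr.
  rewrite exchange_big /=; apply: eq_bigr => k _.
  rewrite exprS -mulmxA mxE mulr_suml mulr_sumr; apply: eq_bigr => l _.
  rewrite mxE; ring.
apply: eq_bigr => k _.
rewrite factS natrM /= /bump /= add0n add1n.
have h1 : (k`!%:R : R) != 0 by rewrite pnatr_eq0 -lt0n fact_gt0.
have h2 : (k.+1%:R : R) != 0 by rewrite pnatr_eq0.

field.
by apply/andP.
Qed.

Lemma bound_exists (R : realType) n (f : R -> 'rV[R]_n) (t : R) :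
  0 <= t -> (forall s j, derivable (fun r => f r 0 j) s (1:R)) ->
  exists B : R, 0 <= B /\ forall s j, 0 <= s <= t -> `|f s 0 j| <= B.
Proof.
move=> t0 hd.
have hj j : exists Bj : R, 0 <= Bj /\ forall s, 0 <= s <= t -> `|f s 0 j| <= Bj.
  have cont : {within `[0,t], continuous (fun r => f r 0 j)}%classic.
    apply: continuous_subspaceT => r.
    exact/differentiable_continuous/derivable1_diffP/hd.
  have [cM _ hM] := EVT_max t0 cont.
  have [cm _ hm] := EVT_min t0 cont.
  exists (`|f cM 0 j| + `|f cm 0 j|); split; first by rewrite addr_ge0.
  move=> s hs; have sin : s \in `[0, t] by rewrite in_itv /=.
  have := hM s sin; have := hm s sin.
  rewrite ler_norml => h1 h2; apply/andP; split.
  + have := ler_norm (- f cm 0 j); rewrite normrN => ?.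
    have := normr_ge0 (f cM 0 j); lra.
  + have := ler_norm (f cM 0 j); have := normr_ge0 (f cm 0 j). lra.
have [Bf hBf] := fin_all_exists hj.
exists (\sum_j Bf j); split; first by apply: sumr_ge0 => j _; case: (hBf j).
move=> s j hs; apply: le_trans (proj2 (hBf j) s hs) _.
rewrite (bigD1 j) //= lerDl; apply: sumr_ge0 => i _; by case: (hBf i).
Qed.

Definition cA {R : realType} {n} (A : 'M[R]_n) : R := \sum_j \sum_l `|A j l|.

Lemma tapp0 (R : realType) n (A : 'M[R]_n) (y : 'rV[R]_n) K j :
  tapp A y 0 K.+1 j = y 0 j.
Proof.
rewrite /tapp big_ord_recl /= expr0 mul1r mul1mx.
rewrite big1 ?addr0; last by move=> i _; rewrite expr0n /= mul0r.
by rewrite fact0 divr1 mxE.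
Qed.

Lemma taylor_pos (R : realType) n (A : 'M[R]_n) (f : R -> 'rV[R]_n) (t : R) :
  0 <= t ->
  (forall s j, is_derive s (1:R) (fun r => f r 0 j) (\sum_l A j l * f s 0 l)) ->
  exists B : R, forall K j,
    `|f t 0 j - tapp A (f 0) t K j| <= B * (cA A * t) ^+ K / K`!%:R.
Proof.
move=> t0 hf.
have [B [B0 hB]] : exists B : R, 0 <= B /\ forall s j, 0 <= s <= t -> `|f s 0 j| <= B.
  by apply: bound_exists => // s j; case: (hf s j).
have c0 : 0 <= cA A by apply: sumr_ge0 => j _; apply: sumr_ge0.
have cj j : \sum_l `|A j l| <= cA A.
  by rewrite /cA [X in _ <= X](bigD1 j) //= lerDl; apply: sumr_ge0 => i _; apply: sumr_ge0.
exists B.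
suff H : forall K s j, 0 <= s <= t ->
    `|f s 0 j - tapp A (f 0) s K j| <= B * (cA A * s) ^+ K / K`!%:R.
  by move=> K j; apply: H; rewrite lexx t0.
elim=> [|K IH] s j hs.
  by rewrite /tapp big_ord0 subr0 expr0 mulr1 fact0 divr1; apply: hB.
have hs0 : 0 <= s by case/andP: hs.
pose u := fun r => f r 0 j - tapp A (f 0) r K.+1 j.
pose du := fun r => \sum_l A j l * (f r 0 l - tapp A (f 0) r K l).
pose C := B * cA A ^+ K.+1 / K.+1`!%:R.
pose psi := fun r : R => r ^+ K.+1 * C.
pose dpsi := fun r : R => K.+1%:R * r ^+ K.+1.-1 * C.
have := @cmp_le R u psi du dpsi 0 s hs0.
have -> : u s - u 0 = u s.
  by rewrite /u tapp0 subrr subr0.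
have -> : psi s - psi 0 = B * (cA A * s) ^+ K.+1 / K.+1`!%:R.
  by rewrite /psi expr0n /= mul0r subr0 /C exprMn; ring.
apply.
- move=> r; have H := is_deriveB (hf r j) (@tapp_derive _ _ A (f 0) r K j).
  have E : (\sum_l A j l * f r 0 l - \sum_l A j l * tapp A (f 0) r K l) = du r.
    by rewrite /du -sumrB; apply: eq_bigr => l _; ring.
  rewrite -E; exact: H.
- move=> r; exact: term_derive.
- move=> r r0 rs.
  have hr : 0 <= r <= t by apply/andP; split; [exact: ltW | apply: le_trans (ltW rs) _; case/andP: hs].
  apply: le_trans (ler_norm_sum _ _ _) _.
  apply: (@le_trans _ _ (\sum_l `|A j l| * (B * (cA A * r) ^+ K / K`!%:R))).
    apply: ler_sum => l _; rewrite normrM ler_wpM2l //; exact: IH.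
  rewrite -mulr_suml.
  have hb0 : 0 <= B * (cA A * r) ^+ K / K`!%:R.
    by rewrite mulr_ge0 ?invr_ge0 ?ler0n // mulr_ge0 // exprn_ge0 // mulr_ge0 // ltW.
  apply: le_trans (ler_wpM2r hb0 (cj j)) _.
  rewrite /dpsi /C /= factS natrM exprMn exprS.
  have h1 : (K`!%:R : R) != 0 by rewrite pnatr_eq0 -lt0n fact_gt0.
  have h2 : (K.+1%:R : R) != 0 by rewrite pnatr_eq0.
  rewrite le_eqVlt; apply/orP; left; apply/eqP.
  field.
  by apply/andP.
Qed.

Lemma cvg_from_bound (R : realType) (u v : nat -> R) (l : R) :
  (v @ \oo --> 0)%classic -> (forall K, `|l - u K| <= v K) -> (u @ \oo --> l)%classic.
Proof.
move=> hv hb; apply/cvgrPdist_le => e e0.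
near=> K; apply: le_trans (hb K) (le_trans (ler_norm _) _).
near: K; exact: cvgr0_norm_le _ hv _ e0.
Unshelve. all: by end_near.
Qed.

Lemma fact_cvg0 (R : realType) (B x : R) :
  ((fun K => B * x ^+ K / K`!%:R) @ \oo --> 0)%classic.
Proof.
have h : ((fun K => x ^+ K / K`!%:R) @ \oo --> 0)%classic.
  exact/cvg_series_cvg_0/is_cvg_series_exp_coeff.
have := cvgMl_tmp (a:=B) h; rewrite mulr0.
have -> : (fun K => B * x ^+ K / K`!%:R) = (fun K => B * (x ^+ K / K`!%:R)).
  by apply/funext => K; rewrite mulrA.
by apply; exact: nbhs_filter.
Qed.

Lemma expNmx (R : realType) n (A : 'M[R]_n) k : (- A) ^+ k = (-1) ^+ k *: A ^+ k.
Proof.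
elim: k => [|k IH]; first by rewrite !expr0 scale1r.
rewrite !exprS IH -!mulmxE mulNmx scalemxAr mulN1r scaleNr. by rewrite mulmxN.
Qed.

Lemma tapp_neg (R : realType) n (A : 'M[R]_n) (y : 'rV[R]_n) t K j :
  tapp (- A) y (- t) K j = tapp A y t K j.
Proof.
rewrite /tapp; apply: eq_bigr => k _.
rewrite expNmx -scalemxAl mxE (exprNn t).
have h : ((-1 : R) ^+ k * (-1) ^+ k = 1) by rewrite -exprMn mulrNN mulr1 expr1n.
set s := (-1 : R) ^+ k in h *.
transitivity ((s * s) * (t ^+ k * ((A ^+ k *m y^T) j 0 / k`!%:R))); last by rewrite h mul1r.
ring.
Qed.

Lemma taylor_cvg (R : realType) n (A : 'M[R]_n) (f : R -> 'rV[R]_n) (t : R) j :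
  (forall s j, is_derive s (1:R) (fun r => f r 0 j) (\sum_l A j l * f s 0 l)) ->
  ((fun K => tapp A (f 0) t K j) @ \oo --> f t 0 j)%classic.
Proof.
move=> hf.
have [t0|t0] := leP 0 t.
  have [B hB] := @taylor_pos _ _ A f t t0 hf.
  exact: (@cvg_from_bound _ _ _ _ (@fact_cvg0 _ B (cA A * t)) (fun K => hB K j)).
pose g := fun r => f (- r).
have hg : forall s j, is_derive s (1:R) (fun r => g r 0 j) (\sum_l (- A) j l * g s 0 l).
  move=> s i.
  have H := is_derive1_comp (f := fun r => f r 0 i) (g := -%R) (hf (- s) i) (is_deriveNid s 1).
  have E : (\sum_l A i l * f (- s) 0 l) * (- 1) = \sum_l (- A) i l * g s 0 l.
    rewrite mulrN1 -sumrN; apply: eq_bigr => l _; rewrite mxE /g; ring.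
  rewrite -E; exact: H.
have t0' : 0 <= - t by rewrite oppr_ge0 ltW.
have [B hB] := @taylor_pos _ _ (- A) g (- t) t0' hg.
apply: (@cvg_from_bound _ _ _ _ (@fact_cvg0 _ B (cA (- A) * - t))) => K.
have := hB K j; by rewrite /g opprK oppr0 tapp_neg.
Qed.

Lemma mx_cvg (R : realType) m n (u : nat -> 'M[R]_(m, n)) (L : 'M[R]_(m, n)) :
  (forall i j, ((fun K => u K i j) @ \oo --> L i j)%classic) -> (u @ \oo --> L)%classic.
Proof.
move=> hu; apply/cvgrPdist_le => e e0.
near=> K.
rewrite [leLHS]/Num.Def.normr/= mx_normrE (bigmax_le _ (ltW e0))//= => ij _.
rewrite !mxE /=.
move: ij; near: K; apply: filter_forall => ij.
exact: ((cvgrPdist_le _ _).1 (hu ij.1 ij.2)).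
Unshelve. all: by end_near.
Qed.

Lemma cvg_sumR (R : realType) m (u : 'I_m -> nat -> R) (L : 'I_m -> R) :
  (forall b, (u b @ \oo --> L b)%classic) ->
  ((fun K => \sum_b u b K) @ \oo --> \sum_b L b)%classic.
Proof.
move=> hu; apply: cvg_big => //.
exact: add_continuous.
Qed.

Lemma derive_lin (R : realType) (V W : normedModType R) (f : V -> W) (a v : V) (c : W) :
  (forall h : R, h != 0 -> h^-1 *: (f (h *: v + a) - f a) = c) -> 'D_v f a = c.
Proof.
move=> H; rewrite /derive; apply: cvg_lim => //.
apply: cvg_trans (cvg_cst c).
apply: near_eq_cvg; near=> h.
  rewrite /= /shift.
  symmetry; apply: H.
  near: h; exact: nbhs_dnbhs_neq.
exact: dnbhs_filter.
Unshelve. all: by end_near.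
Qed.

Lemma expZmx (R : realType) n (A : 'M[R]_n) (a : R) k : (a *: A) ^+ k = a ^+ k *: A ^+ k.
Proof.
elim: k => [|k IH]; first by rewrite !expr0 scale1r.
by rewrite !exprS IH -!mulmxE -scalemxAl !scalemxAr scalerA.
Qed.

Lemma sum_delta (R : realType) n (x : 'I_n -> R) b :
  \sum_l x l * (l == b)%:R = x b.
Proof.
rewrite (bigD1 b) //= eqxx mulr1 big1 ?addr0 // => l /negbTE ->; by rewrite mulr0.
Qed.

Lemma tapp_ucoord (R : realType) n (A : 'M[R]_n) t K j b :
  tapp A (ucoord R b) t K j = \sum_(k < K) t ^+ k * ((A ^+ k) j b / k`!%:R).
Proof.
rewrite /tapp; apply: eq_bigr => k _; rewrite mxE.
under eq_bigr do rewrite !mxE.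
by rewrite sum_delta.
Qed.

Lemma tapp_lin (R : realType) n (A : 'M[R]_n) y t K j :
  tapp A y t K j = \sum_b y 0 b * tapp A (ucoord R b) t K j.
Proof.
under [RHS]eq_bigr do rewrite tapp_ucoord mulr_sumr.
rewrite exchange_big /=; apply: eq_bigr => k _.
rewrite mxE mulr_suml mulr_sumr; apply: eq_bigr => l _.
rewrite mxE; ring.
Qed.

Theorem mainTheorem5 (R : realType) (n p : nat)
  (beta : 'M[R]_p) (E : 'I_p -> 'M[R]_n)
  (* E^i_{ab} antisymmetric, beta real symmetric nondegenerate *)
  (hE : forall i, (E i)^T = - E i)
  (hbeta_sym : beta^T = beta) (hbeta_nd : beta \in unitmx)
  (* frame e_a^mu(y) (row a) and dual coframe e^a_mu(y) (row a),
     in Riemann normal coordinates y centred at x' (y = 0 is x') *)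
  (F C : 'rV[R]_n -> 'M[R]_n)
  (hF0 : F 0 = 1%:M)
  (hdual : forall y, C y *m (F y)^T = 1%:M)
  (omega : 'rV[R]_p)
  (* psi : one-parameter group generated by xi = omega^i L_i (p = 0) *)
  (psi : R -> 'rV[R]_n -> 'rV[R]_n)
  (hpsi0 : forall y, psi 0 y = y)
  (hpsi_grp : forall s t y, psi (s + t) y = psi s (psi t y))
  (hpsi_flow : forall (t : R) (y : 'rV[R]_n),
      is_derive t (1 : R) (fun s => psi s y) (xi0 beta E omega (psi t y)))
  (hpsi_diff : forall (t : R) (y : 'rV[R]_n), differentiable (psi t) y)
  (t : R) :
  Omat C F (psi t) 0 = mexp (- (t *: Domega beta E omega)).
Proof.
set D := Domega beta E omega.
set A := - D.
have hxi : forall v j, xi0 beta E omega v 0 j = \sum_l A j l * v 0 l.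
  move=> v j; rewrite /xi0 summxE.
  rewrite [RHS](eq_bigr (fun l => - \sum_i omega 0 i * Dmat beta E i j l * v 0 l)); last first.
    move=> l _; rewrite !mxE summxE mulNr mulr_suml; congr (- _); apply: eq_bigr => i _.
    by rewrite !mxE.
  rewrite sumrN exchange_big /= -sumrN.
  apply eq_bigr => i _.
  rewrite !mxE mulrN mulr_sumr; congr (- _); apply eq_bigr => l _; ring.
have hf : forall y s j, is_derive s (1:R) (fun r => psi r y 0 j) (\sum_l A j l * psi s y 0 l).
  move=> y s j; case: (hpsi_flow s y) => hd hv.
  have hdj := (derivable_mxP _ _ _).1 hd 0 j.
  apply: DeriveDef => //.
  have E1 := derive_mx hd; rewrite hv in E1.
  have := congr1 (fun M : 'M[R]_(1, n) => M 0 j) E1; rewrite /= mxE hxi => <- //.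
have hcv : forall y j, ((fun K => tapp A y t K j) @ \oo --> psi t y 0 j)%classic.
  move=> y j; have := @taylor_cvg _ _ A (fun s => psi s y) t j (hf y).
  by rewrite /= hpsi0.
pose Q : 'M[R]_n := \matrix_(j, b) psi t (ucoord R b) 0 j.
have hlin : forall y, psi t y = \row_j \sum_b y 0 b * Q j b.
  move=> y; apply/rowP => j; rewrite !mxE.
  apply: (cvg_unique _ (hcv y j)); first exact: norm_hausdorff.
  rewrite /=. under eq_cvg do rewrite tapp_lin.
  apply: cvg_sumR => b; apply: cvgMl_tmp; rewrite mxE; exact: hcv.
have hmexp : mexp (- (t *: D)) = Q.
  rewrite /mexp; apply: cvg_lim => //; apply: mx_cvg => j b.
  have -> : (fun K => series (fun k : nat => (k`!%:R)^-1 *: (- (t *: D)) ^+ k) K j b)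
      = (fun K => tapp A (ucoord R b) t K j).
    apply/funext => K; rewrite tapp_ucoord /series /= big_mkord summxE.
    apply eq_bigr => k _; rewrite -scalerN expZmx !mxE; ring.
  rewrite mxE; exact: hcv.
have hjac : jac (psi t) 0 = Q.
  apply/matrixP => a b; rewrite mxE.
  rewrite (@derive_lin _ _ _ _ _ _ (\row_j \sum_l (ucoord R b) 0 l * Q j l)); last first.
    move=> h h0; rewrite addr0 !hlin; apply/rowP => j; rewrite !mxE.
    rewrite [X in _ - X]big1 ?subr0; last by move=> l _; rewrite mxE mul0r.
    rewrite mulr_sumr; apply eq_bigr => l _; rewrite !mxE; field.
    exact: h0.
  rewrite mxE; under eq_bigr do rewrite mxE mulrC; exact: sum_delta.
have hpsi00 : psi t 0 = 0.
  by rewrite hlin; apply/rowP => j; rewrite !mxE big1 // => l _; rewrite mxE mul0r.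
have hC : C 0 = 1%:M by have := hdual 0; rewrite hF0 trmx1 mulmx1.
rewrite hmexp /Omat hpsi00 hC hF0 hjac; apply/matrixP => a b; rewrite mxE.
rewrite (bigD1 a) //= [X in _ + X]big1 ?addr0.
  under eq_bigr => mu _ do rewrite !mxE eqxx mulr1n mul1r [b == mu]eq_sym.
  by rewrite (@sum_delta _ _ (fun mu => psi t (ucoord R mu) 0 a)) mxE.
move=> al hal; apply: big1 => mu _; rewrite !mxE eq_sym (negbTE hal) mulr0n.
by rewrite !mul0r.
Qed.
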